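(* Let $(\mathfrak{g},\omega)$ be a $2n$-dimensional real irreducible symplectic Lie algebra. For $\alpha\in\mathfrak{g}^*$ let $\omega_\alpha=\omega+d\alpha$. If $\omega_\alpha$ is non-degenerate, then $(\mathfrak{g},\omega_\alpha)$ is a $2n$-dimensional irreducible symplectic Lie algebra.
   Context: A symplectic Lie algebra is a real Lie algebra with a non-degenerate 2-form $\omega$ satisfying $\omega([x,y],z)+\omega([y,z],x)+\omega([z,x],y)=0$; it is irreducible if it has no nonzero ideal $\mathfrak{j}$ with $\omega(\mathfrak{j},\mathfrak{j})=0$. $d\alpha(x,y)=-\alpha([x,y])$. *)

(* Defs.v *)
(* A real Lie algebra of dimension m is modelled on the
   real vector space 'rV[R]_m (R : realType), with the bracket as a function. *)
From HB Require Import structures.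
From mathcomp Require Import all_boot all_order all_algebra.
From mathcomp Require Import reals.
Set Implicit Arguments. Unset Strict Implicit. Unset Printing Implicit Defensive.
Import Order.TTheory GRing.Theory Num.Theory.
Local Open Scope ring_scope.

Section Defs.
Variables (R : realType) (m : nat).
Local Notation V := 'rV[R]_m.

Definition is_lie_bracket (br : V -> V -> V) : Prop :=
  [/\ (forall (a : R) (x y z : V), br (a *: x + y) z = a *: br x z + br y z),
      (forall (a : R) (x y z : V), br x (a *: y + z) = a *: br x y + br x z),
      (forall x : V, br x x = 0) &
      (forall x y z : V, br x (br y z) + br y (br z x) + br z (br x y) = 0)].

Definition is_linear_form (alpha : V -> R) : Prop :=
  forall (a : R) (x y : V), alpha (a *: x + y) = a * alpha x + alpha y.

Definition is_two_form (w : V -> V -> R) : Prop :=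
  [/\ (forall (a : R) (x y z : V), w (a *: x + y) z = a * w x z + w y z),
      (forall (a : R) (x y z : V), w x (a *: y + z) = a * w x y + w x z) &
      (forall x : V, w x x = 0)].

Definition nondegenerate_form (w : V -> V -> R) : Prop :=
  forall x : V, (forall y : V, w x y = 0) -> x = 0.

Definition is_closed_form (br : V -> V -> V) (w : V -> V -> R) : Prop :=
  forall x y z : V, w (br x y) z + w (br y z) x + w (br z x) y = 0.

Definition symplectic_lie (br : V -> V -> V) (w : V -> V -> R) : Prop :=
  [/\ is_lie_bracket br, is_two_form w, nondegenerate_form w & is_closed_form br w].

Definition is_ideal (br : V -> V -> V) (J : V -> Prop) : Prop :=
  [/\ J 0,
      (forall (a : R) (x y : V), J x -> J y -> J (a *: x + y)) &
      (forall x y : V, J y -> J (br x y))].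

Definition irreducible_symplectic_lie (br : V -> V -> V) (w : V -> V -> R) : Prop :=
  symplectic_lie br w /\
  ~ (exists J : V -> Prop,
       [/\ is_ideal br J, (exists x, J x /\ x <> 0) &
           (forall x y, J x -> J y -> w x y = 0)]).

Definition dform (br : V -> V -> V) (alpha : V -> R) : V -> V -> R :=
  fun x y => - alpha (br x y).

Definition omega_shift (br : V -> V -> V) (w : V -> V -> R) (alpha : V -> R)
  : V -> V -> R := fun x y => w x y + dform br alpha x y.

End Defs.

(* Main.v *)
Require Import Defs.
From mathcomp Require Import all_boot all_order all_algebra.
From mathcomp Require Import reals.
From mathcomp Require Import ring.
Local Open Scope ring_scope.
Import GRing.Theory.

Theorem lemma2p6 (R : realType) (n : nat)
  (br : 'rV[R]_(2 * n) -> 'rV[R]_(2 * n) -> 'rV[R]_(2 * n))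
  (w : 'rV[R]_(2 * n) -> 'rV[R]_(2 * n) -> R)
  (alpha : 'rV[R]_(2 * n) -> R) :
  irreducible_symplectic_lie br w ->
  is_linear_form alpha ->
  nondegenerate_form (omega_shift br w alpha) ->
  irreducible_symplectic_lie br (omega_shift br w alpha).
Proof.
move=> [[[bl br_r bxx bj] [wl wr wxx] wnd wcl] Hirr] Hal Hnd.
have a0 : alpha 0 = 0.
  have := Hal 1 0 0; rewrite scale1r addr0 mul1r => /(congr1 (fun t => t - alpha 0)).
  by rewrite subrr addrK => <-.
have aD : forall x y, alpha (x + y) = alpha x + alpha y.
  by move=> x y; have := Hal 1 x y; rewrite scale1r mul1r.
have anti : forall x y, br y x = - br x y.
  move=> x y; have H := bxx (x + y).
  have L1 := bl 1 x y (x+y); have L2 := br_r 1 x x y; have L3 := br_r 1 y x y.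
  rewrite !scale1r in L1. rewrite !scale1r in L2. rewrite !scale1r in L3.
  rewrite L1 L2 L3 bxx (bxx y) add0r addr0 in H.
  by apply/eqP; rewrite -subr_eq0 opprK addrC H.
have b0 : forall x, br x 0 = 0.
  move=> x; have := br_r 1 x 0 0; rewrite !scale1r addr0 => /(congr1 (fun t => t - br x 0)).
  by rewrite subrr addrK => <-.
have wcs : is_closed_form br (omega_shift br w alpha).
  move=> x y z; rewrite /omega_shift /dform.
  have := wcl x y z.
  have Hj : br (br x y) z + br (br y z) x + br (br z x) y = 0.
    rewrite (anti z (br x y)) (anti x (br y z)) (anti y (br z x)).
    by rewrite -addrA addrC -!opprD bj oppr0.
  have := congr1 alpha Hj; rewrite !aD a0 => Ha Hw.
  set A := alpha _ in Ha *; set B := alpha _ in Ha *; set C := alpha _ in Ha *.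
  set P := w _ _ in Hw *; set Q := w _ _ in Hw *; set S := w _ _ in Hw *.
  apply/eqP; rewrite -[_ == 0]/(_ == _).
  have -> : P + - A + (Q + - B) + (S + - C) = (P + Q + S) - (A + B + C).
    by rewrite !opprD !addrA; congr (_ + _); rewrite -!addrA; congr (_ + _);
       rewrite !addrA addrC !addrA; congr (_ + _); rewrite addrC !addrA; congr (_+_);
       rewrite addrC.
  by rewrite Hw Ha subr0.
split.
  split => //.
  - split => //.
    + move=> a x y z; rewrite /omega_shift /dform bl Hal wl.
      ring.
    + move=> a x y z; rewrite /omega_shift /dform br_r Hal wr.
      ring.
    + by move=> x; rewrite /omega_shift /dform wxx bxx a0 oppr0 addr0.
move=> [J [[J0 Jlin Jbr] [x0 [Jx0 x0n]] Jiso]].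
have Jab : forall x y, J x -> J y -> br x y = 0.
  move=> x y Jx Jy; apply: Hnd => z.
  have := wcs x y z.
  have Jr : forall u v, J u -> J (br u v).
    move=> u v Ju; rewrite anti; have := Jlin (-1) (br v u) 0; rewrite addr0 scaleN1r.
    by apply => //; apply: Jbr.
  have Jyz := Jr y z Jy; have Jzx := Jbr z x Jx.
  rewrite (Jiso (br y z) x) ?(Jiso (br z x) y) //.
  by rewrite !addr0.
apply: Hirr; exists J; split => //.
  by exists x0.
move=> x y Jx Jy; have := Jiso x y Jx Jy.
by rewrite /omega_shift /dform Jab // a0 oppr0 addr0.
Qed.
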